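(* In the 1-sided False Positive regime, there exists an algorithm that performs $O(m\log m)$ queries on any moldgraph with $m$ edges and finds a realized spanning tree with high probability.
   Context: Problem (graph connectivity with noisy queries): a graph $G=(V,E)$, the moldgraph, with $m$ edges is given. An adversary selects an arbitrary connected spanning subgraph of $G$ to be realized. The algorithm may query an oracle on any edge $e$ (``Is $e$ realized?''), receiving ``Yes''/``No''; each query costs $1$; answers to distinct queries (including repeated queries of the same edge) are independent. Goal: output a spanning tree of $G$ all of whose edges are realized. In the 1-sided False Positive regime: for a realized edge the answer is always ``Yes''; for a non-realized edge the answer is ``Yes'' with a constant probability $p<1/2$ and ``No'' with probability $1-p$. ``With high probability'' means with probability tending to $1$ as $m\to\infty$. *)

(* Defs.v *)
From mathcomp Require Import all_boot all_order all_algebra.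
Set Implicit Arguments. Unset Strict Implicit. Unset Printing Implicit Defensive.
Import Order.TTheory GRing.Theory Num.Theory.
Local Open Scope ring_scope.

(* A (simple) graph on vertex set 'I_n is given by its edge set: a set of
   2-element vertex sets. *)
Definition edge_set (n : nat) := {set {set 'I_n}}.

Definition simple_graph n (E : edge_set n) : bool :=
  [forall e in E, #|e| == 2%N].

Definition adj n (F : edge_set n) : rel 'I_n := fun x y => [set x; y] \in F.

Definition connectedb n (F : edge_set n) : bool :=
  [forall x, forall y, connect (adj F) x y].

(* (V, F) has no cycle: every edge is a bridge *)
Definition acyclicb n (F : edge_set n) : bool :=
  [forall e in F, forall x in e, forall y in e,
     (x != y) ==> ~~ connect (adj (F :\ e)) x y].

Definition spanning_treeb n (F : edge_set n) : bool :=
  connectedb F && acyclicb F.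

Definition good_output n (E Rz T : edge_set n) : bool :=
  [&& T \subset E, T \subset Rz & spanning_treeb T].

Variant action (n : nat) := Query of {set 'I_n} | Output of edge_set n.

Definition history n := seq ({set 'I_n} * bool).

Definition algorithm :=
  forall n : nat, edge_set n -> history n -> action n.

(* Probability that the strategy [f], started from history [h], outputs a
   realized spanning tree using at most [k] further queries, in the
   1-sided false-positive model with parameter p (realized edge: always Yes;
   non-realized edge: Yes w.p. p, No w.p. 1-p; answers independent).
   Exceeding the query budget counts as failure. *)
Fixpoint succ_prob (R : ringType) (p : R) n (E Rz : edge_set n)
    (f : history n -> action n) (k : nat) (h : history n) : R :=
  match f h with
  | Output T => if good_output E Rz T then 1 else 0
  | Query e =>
      match k with
      | 0 => 0
      | k'.+1 =>
          if e \in Rz then succ_prob p E Rz f k' (rcons h (e, true))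
          else p * succ_prob p E Rz f k' (rcons h (e, true))
               + (1 - p) * succ_prob p E Rz f k' (rcons h (e, false))
      end
  end.

Definition success_prob (R : ringType) (p : R) (A : algorithm) n
    (E Rz : edge_set n) (k : nat) : R :=
  succ_prob p E Rz (A n E) k [::].

(* Main.v *)
Require Import Defs.
From mathcomp Require Import all_boot all_order all_algebra.
From mathcomp Require Import ring lra zify.
Import Order.TTheory GRing.Theory Num.Theory.
Set Implicit Arguments. Unset Strict Implicit.
Local Open Scope ring_scope.
Lemma adj_sym n (F : edge_set n) : symmetric (adj F).
Proof. by move=> x y; rewrite /adj setUC. Qed.

Lemma exists_st n (T : edge_set n) :
  (forall e, e \in T -> #|e| = 2%N) -> connectedb T ->
  exists T' : edge_set n, (T' \subset T) && spanning_treeb T'.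
Proof.
move Hc: #|T| => c; elim: c {-2}c (leqnn c) T Hc => [|c IH] c0 Hc0 T HT H2 Hconn.
- exists T; rewrite subxx /spanning_treeb Hconn /=.
  move: Hc0; rewrite leqn0 -HT => /eqP/cards0_eq ->.
  by apply/forall_inP => e; rewrite inE.
- case Hac: (acyclicb T).
    by exists T; rewrite subxx /spanning_treeb Hconn Hac.
  move/negbT: Hac => /forall_inPn [e eT /forall_inPn [x xe /forall_inPn [y ye]]].
  rewrite negb_imply negbK => /andP [xy cxy].
  have ee : e = [set x; y].
    apply/eqP; rewrite eq_sym eqEcard H2 // cards2 xy andbT.
    by apply/subsetP => z; rewrite !inE => /orP [] /eqP ->.
  have Hconn' : connectedb (T :\ e).
    apply/forallP => u; apply/forallP => v.
    move/forallP: Hconn => /(_ u)/forallP/(_ v).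
    apply: connect_sub => a b Hab.
    case: (eqVneq [set a; b] e) => Hae; last first.
      by apply: connect1; rewrite /adj !inE Hae.
    have : a \in e by rewrite -Hae !inE eqxx.
    have : b \in e by rewrite -Hae !inE eqxx orbT.
    rewrite ee !inE => /orP [] /eqP -> /orP [] /eqP ->; rewrite -ee ?connect0 //.
    by rewrite (sym_connect_sym (@adj_sym n _)).
  have Hlt : (#|T :\ e| <= c)%N.
    by move: Hc0; rewrite -HT (cardsD1 e T) eT add1n ltnS.
  have [T' /andP [sub st]] := IH _ Hlt (T :\ e) erefl
     (fun f hf => H2 f (subsetP (subD1set T e) f hf)) Hconn'.
  exists T'; rewrite st andbT; apply: subset_trans sub _; exact: subD1set.
Qed.
Definition sched n (E : edge_set n) : seq {set 'I_n} :=
  flatten [seq nseq (trunc_log 2 #|E|).+1 e | e <- enum E].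
Definition acc n (E : edge_set n) (h : history n) : edge_set n :=
  [set e in E | (e, false) \notin h].
Definition alg : algorithm := fun n E h =>
  if (size h < size (sched E))%N then Query (nth set0 (sched E) (size h))
  else Output (odflt set0 [pick T : edge_set n | (T \subset acc E h) && spanning_treeb T]).

Section Main.
Variables (R : archiRealFieldType) (p : R) (p0 : 0 <= p) (p1 : p <= 1).
Variables (n : nat) (E Rz : edge_set n).
Hypotheses (sE : simple_graph E) (RzE : Rz \subset E) (cR : connectedb Rz).

Definition B (h : history n) : R :=
  \sum_(e in E | e \notin Rz)
     (if (e, false) \in h then 0 else p ^+ count_mem e (drop (size h) (sched E))).

Lemma B_ge0 h : 0 <= B h.
Proof. by apply: sumr_ge0 => e _; case: ifP => // _; apply: exprn_ge0. Qed.

Lemma good_final (h : history n) :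
  (forall e, (e, false) \in h -> e \notin Rz) ->
  (forall e, e \in E -> e \notin Rz -> (e, false) \in h) ->
  good_output E Rz (odflt set0 [pick T : edge_set n | (T \subset acc E h) && spanning_treeb T]).
Proof.
move=> Hinv Hall.
have accR : acc E h = Rz.
  apply/setP => e; rewrite !inE.
  case eR: (e \in Rz).
    by rewrite (subsetP RzE _ eR) /=; apply/negP => /Hinv; rewrite eR.
  by case eE: (e \in E) => //=; rewrite Hall // eR.
case: pickP => [T /andP [sT stT] | Hnone] /=.
  rewrite /good_output stT andbT -accR sT andbT.
  by apply: subset_trans sT _; rewrite accR.
have [T' /andP [sT' st']] := @exists_st n Rz
  (fun e he => eqP (forall_inP sE e (subsetP RzE e he))) cR.
by move: (Hnone T'); rewrite accR sT' st'.
Qed.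

Lemma succ_out (f : history n -> action n) k h T : f h = Output T ->
  succ_prob p E Rz f k h = if good_output E Rz T then 1 else 0.
Proof. by move=> H; case: k => [|k] /=; rewrite H. Qed.

Lemma succ_q (f : history n -> action n) k h e : f h = Query e ->
  succ_prob p E Rz f k.+1 h =
  if e \in Rz then succ_prob p E Rz f k (rcons h (e, true))
  else p * succ_prob p E Rz f k (rcons h (e, true))
       + (1 - p) * succ_prob p E Rz f k (rcons h (e, false)).
Proof. by move=> H /=; rewrite H. Qed.

Lemma main d (h : history n) b :
  (size h + d)%N = size (sched E) -> (size (sched E) <= size h + b)%N ->
  (forall e, (e, false) \in h -> e \notin Rz) ->
  1 - B h <= succ_prob p E Rz (@alg n E) b h.
Proof.
elim: d h b => [|d IH] h b.
- rewrite addn0 => Hs _ Hinv.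
  rewrite (succ_out _ _ (T := odflt set0 [pick T : edge_set n | (T \subset acc E h) && spanning_treeb T])); last by rewrite /alg Hs ltnn.
  case: ifP => Hg; first by rewrite lerBlDr lerDl B_ge0.
  rewrite subr_le0.
  have [e /and3P [eE eR eh]] : exists e, [&& e \in E, e \notin Rz & (e, false) \notin h].
    apply/existsP; case: (boolP [exists e, [&& e \in E, e \notin Rz & (e, false) \notin h]]) => // Hn.
    have : good_output E Rz (odflt set0 [pick T : edge_set n | (T \subset acc E h) && spanning_treeb T]).
      apply: good_final => // e eE eR; apply/negPn/negP => eh; move/existsP: Hn; apply; exists e.
      by rewrite eE eR eh.
    by rewrite Hg.
  rewrite /B (bigD1 e) /=; last by rewrite eE.
  rewrite (negbTE eh) Hs drop_size /= expr0 lerDl.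
  by apply: sumr_ge0 => f _; case: ifP => // _; apply: exprn_ge0.
- move=> Hs Hb Hinv.
  have Hlt : (size h < size (sched E))%N by rewrite -Hs addnS ltnS leq_addr.
  case: b Hb => [|b] Hb; first by move: Hb; rewrite addn0 leqNgt Hlt.
  set e0 := nth set0 (sched E) (size h).
  have Hdrop := drop_nth set0 Hlt.
  rewrite (succ_q _ _ (e := e0)); last by rewrite /alg Hlt.
  have IH' : forall bb, (forall e, (e, false) \in rcons h (e0, bb) -> e \notin Rz) ->
    1 - B (rcons h (e0, bb)) <= succ_prob p E Rz (@alg n E) b (rcons h (e0, bb)).
    move=> bb Hi; apply: IH => //; rewrite size_rcons; lia.
  have memr : forall e bb c, ((e, c) \in rcons h (e0, bb)) = ((e, c) == (e0, bb)) || ((e, c) \in h).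
    by move=> e bb c; rewrite mem_rcons inE.
  case: ifP => e0R.
  + have -> : B h = B (rcons h (e0, true)).
      rewrite /B size_rcons; apply: eq_bigr => e /andP [_ eR].
      rewrite memr Hdrop /= xpair_eqE andbF /=.
      have -> : (e0 == e) = false by apply/negP => /eqP E0; move: eR; rewrite -E0 e0R.
      by [].
    apply: IH' => e; rewrite memr xpair_eqE andbF /=; exact: Hinv.
  + have HT := IH' true (fun e => ltac:(by rewrite memr xpair_eqE andbF /=; exact: Hinv)).
    have HF : 1 - B (rcons h (e0, false)) <= succ_prob p E Rz (@alg n E) b (rcons h (e0, false)).
      apply: IH' => e; rewrite memr xpair_eqE andbT => /orP [/eqP -> | ]; first by rewrite e0R.
      exact: Hinv.
    have key : B h = p * B (rcons h (e0, true)) + (1 - p) * B (rcons h (e0, false)).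
      rewrite /B !mulr_sumr -big_split /=; apply: eq_bigr => e _.
      rewrite !memr !size_rcons Hdrop /= !xpair_eqE andbT andbF /=.
      case: (eqVneq e e0) => [-> | ne] /=.
        case: ifP => _; first by rewrite !mulr0 addr0.
        by rewrite add1n exprS mulr0 addr0.
      rewrite add0n.
      by case: ifP => _; rewrite -mulrDl addrC subrK mul1r.
    rewrite key.
    have q0 : 0 <= 1 - p by rewrite subr_ge0.
    have := ler_wpM2l p0 HT; have := ler_wpM2l q0 HF.
    set x := succ_prob _ _ _ _ _ _; set y := succ_prob _ _ _ _ _ _.
    move=> h1 h2; apply: le_trans _ (lerD h2 h1).
    by rewrite le_eqVlt; apply/orP; left; apply/eqP; ring.
Qed.
End Main.
Lemma size_sched n (E : edge_set n) :
  size (sched E) = (#|E| * (trunc_log 2 #|E|).+1)%N.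
Proof.
rewrite /sched; move: (trunc_log 2 #|E|).+1 => k.
rewrite cardE; elim: (enum E) => [|x s IH] //=.
by rewrite size_cat size_nseq IH mulSn.
Qed.

Lemma count_sched n (E : edge_set n) e : e \in E ->
  count_mem e (sched E) = (trunc_log 2 #|E|).+1.
Proof.
move=> eE; rewrite /sched; move: (trunc_log 2 #|E|).+1 => k.
have : count_mem e (enum E) = 1%N by rewrite count_uniq_mem ?enum_uniq // mem_enum eE.
elim: (enum E) => [|x s IH] //=.
rewrite count_cat count_nseq /=.
case: (eqVneq x e) => [_ | ne] /=.
  rewrite add1n => -[H].
  rewrite mul1n.
  suff -> : count_mem e (flatten [seq nseq k e0 | e0 <- s]) = 0%N by rewrite addn0.
  elim: s H {IH} => [|y s IH2] //= H.
  have Hs : count_mem e s = 0%N by move: H; case: (y == e); rewrite ?add0n ?add1n.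
  have Hy : (y == e) = false by move: H; case: (y == e); rewrite ?add0n ?add1n.
  by rewrite count_cat count_nseq IH2 // /= Hy.
by rewrite mul0n add0n add0n.
Qed.

Lemma bern (R : realFieldType) (a : R) k : 0 <= a -> 1 + k%:R * a <= (1 + a) ^+ k.
Proof.
move=> a0; elim: k => [|k IH]; first by rewrite mul0r addr0 expr0.
rewrite exprS -natr1.
have h1 : 0 <= 1 + a by lra.
have := ler_wpM2l h1 IH.
have : 0 <= k%:R * a * a by apply: mulr_ge0 => //; apply: mulr_ge0.
move=> h2 h3; apply: le_trans h3; nra.
Qed.

Lemma small_pow (R : archiRealFieldType) (q eps : R) : 0 <= q -> q < 1 -> 0 < eps ->
  exists K : nat, forall j, (K <= j)%N -> q ^+ j <= eps.
Proof.
move=> q0 q1 e0.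
case: (eqVneq q 0) => [-> | qn0].
  by exists 1%N => j hj; rewrite expr0n; case: j hj => // j _ /=; rewrite ltW.
have qp : 0 < q by rewrite lt_def qn0 q0.
set a := q^-1 - 1.
have qi : q * q^-1 = 1 by rewrite mulfV.
have ap : 0 < a.
  rewrite /a; have : 0 < q^-1 by rewrite invr_gt0.
  move: (q^-1) qi => r qr rp; nra.
have ea : 0 < eps * a by rewrite mulr_gt0.
have Hx : 0 <= (eps * a)^-1 by rewrite invr_ge0 ltW.
exists (Num.bound ((eps * a)^-1)) => j hj.
have H1 := archi_boundP Hx.
have H2 : (Num.bound ((eps * a)^-1))%:R <= j%:R :> R by rewrite ler_nat.
have H3 := bern j (ltW ap).
have qa : q * (1 + a) = 1 by rewrite /a addrC subrK mulfV.
have H4 : q ^+ j * (1 + a) ^+ j = 1 by rewrite -exprMn qa expr1n.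
have H6 : (eps * a) * (eps * a)^-1 = 1 by rewrite mulfV // gt_eqF.
have H5 : 1 <= eps * (j%:R * a).
  have : (eps * a)^-1 < j%:R by apply: lt_le_trans H1 H2.
  move: ((eps * a)^-1) H6 => z H6 Hz.
  have : eps * a * z < eps * a * j%:R by rewrite ltr_pM2l.
  lra.
have H7 : 0 <= q ^+ j by rewrite exprn_ge0.
move: (q ^+ j) ((1 + a) ^+ j) (j%:R : R) H3 H4 H5 H7 => x y jj H3 H4 H5 H7.
have : 1 <= eps * y.
  have : eps * (1 + jj * a) <= eps * y by rewrite ler_pM2l.
  have : 0 <= eps by rewrite ltW.
  nra.
nra.
Qed.

Unset Implicit Arguments.
Theorem lemma7 (R : archiRealFieldType) (p : R) :
  0 <= p -> p < 2^-1 ->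
  exists (A : algorithm) (C : nat),
    forall eps : R, 0 < eps ->
    exists M : nat,
      forall (n : nat) (E Rz : edge_set n),
        simple_graph E -> Rz \subset E -> connectedb Rz ->
        (M <= #|E|)%N ->
        1 - eps <= success_prob p A E Rz (C * #|E| * (trunc_log 2 #|E|).+1).
Proof.
move=> p0 p2.
have h2 : (2 : R) * 2^-1 = 1 by rewrite mulfV // pnatr_eq0.
have q0 : 0 <= 2 * p by rewrite mulr_ge0.
have q1 : 2 * p < 1 by move: (2^-1 : R) h2 p2 => z h2 p2; lra.
have p1 : p <= 1 by lra.
exists alg, 1%N => eps e0.
have [K HK] := small_pow q0 q1 e0.
exists (2 ^ K)%N => n E Rz sE RzE cR HM.
set k := (trunc_log 2 #|E|).+1.
have Hk : (K <= k)%N by apply: leqW; apply: trunc_log_max.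
have Hm : (#|E| < 2 ^ k)%N by apply: trunc_log_ltn.
have Hmain := @main R p p0 p1 n E Rz sE RzE cR (size (sched E)) [::] (1 * #|E| * k)%N.
rewrite /success_prob.
apply: le_trans (Hmain erefl _ _); last 2 first.
- by rewrite size_sched mul1n.
- by [].
rewrite lerD2l lerN2.
have -> : B p E Rz [::] = \sum_(e in E | e \notin Rz) p ^+ k.
  by apply: eq_bigr => e /andP [eE _]; rewrite drop0 count_sched.
apply: le_trans (HK k Hk).
apply: le_trans (_ : \sum_(e in E) p ^+ k <= _).
  rewrite [X in _ <= X](bigID (fun e => e \notin Rz)) /= lerDl.
  by apply: sumr_ge0 => e _; apply: exprn_ge0.
rewrite sumr_const exprMn -[p ^+ k *+ #|E|]mulr_natl -natrX.
by apply: ler_wpM2r; [apply: exprn_ge0 | rewrite ler_nat ltnW].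
Qed.
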